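(* For every integer $n\ge 1$, $(n-1) P_{n-1}^3=(2 P_{n}^2+(n-1) P_{2 n-1}) P_{n-1}+(n+1) P_{n} (P_{n} P_{n+1}-P_{2 n})$, where $P_k$ denotes the $k$-th Pell number.
   Context: The Pell numbers are defined by $P_0=0$, $P_1=1$, $P_k=2P_{k-1}+P_{k-2}$ for $k\ge 2$. *)

(* Defs.v *)
(* Pell numbers as integers (the identity involves subtraction). *)
From mathcomp Require Import all_boot all_order all_algebra.
Set Implicit Arguments. Unset Strict Implicit. Unset Printing Implicit Defensive.
Import GRing.Theory Num.Theory.
Local Open Scope ring_scope.

Fixpoint pell (k : nat) : int :=
  match k with
  | 0%N => 0
  | 1%N => 1
  | (k'.+1 as k1).+1 => 2 * pell k1 + pell k'
  end.

(* Main.v *)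
Require Import Defs.
From mathcomp Require Import all_boot all_order all_algebra.
From mathcomp Require Import ring zify.
Import GRing.Theory Num.Theory.
Local Open Scope ring_scope.

Lemma pellSS k : pell k.+2 = 2 * pell k.+1 + pell k.
Proof. by []. Qed.

Lemma pell_add m k :
  pell (m + k).+1 = pell m.+1 * pell k.+1 + pell m * pell k
  /\ pell (m + k.+1).+1 = pell m.+1 * pell k.+2 + pell m * pell k.+1.
Proof.
elim: k => [|k [IH1 IH2]].
  rewrite addn0 addn1 pellSS.
  change (pell 2) with (2:int); change (pell 1) with (1:int); change (pell 0) with (0:int).
  move: (pell m) (pell m.+1) => a b; split; ring.
split; first exact IH2.
rewrite !addnS in IH1 IH2 *.
rewrite pellSS IH2 IH1 (pellSS k.+1) (pellSS k).
move: (pell m) (pell m.+1) (pell k) (pell k.+1) => a b c d; ring.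
Qed.

Theorem proposition7p5 (n : nat) (hn : (1 <= n)%N) :
  (n.-1)%:R * pell n.-1 ^+ 3 =
  (2 * pell n ^+ 2 + (n.-1)%:R * pell (2 * n).-1) * pell n.-1
  + (n.+1)%:R * pell n * (pell n * pell n.+1 - pell (2 * n)) :> int.
Proof.
case: n hn => [//|m] _.
rewrite [(m.+1).-1]/=.
have E1 : pell (2 * m.+1).-1 = pell m.+1 * pell m.+1 + pell m * pell m.
  have -> : ((2 * m.+1).-1 = (m + m).+1)%N by lia.
  by case: (pell_add m m).
have E2 : pell (2 * m.+1) = pell m.+1 * pell m.+2 + pell m * pell m.+1.
  have -> : ((2 * m.+1) = (m + m.+1).+1)%N by lia.
  by case: (pell_add m m.+1).
rewrite E1 E2 (pellSS m) -[(m.+2)%:R]natr1 -[(m.+1)%:R]natr1.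
move: (pell m) (pell m.+1) (m%:R : int) => a b c.
ring.
Qed.
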